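(* Let $k\ge1$, let $n_k\in\{0,1\}^k$, and let $\eta=\alpha\circ\tau_{n_k}\colon\Sigma\to\Sigma$. Then: (i) $\eta$ is continuous; (ii) $\underline0$ is a periodic point of $\eta$ of period $2^k$, and its $\eta$-orbit intersects the cylinder $\Sigma_{n_k}$ in exactly one point, namely $n_k\underline0$; (iii) every point $\underline n\in B$ is $\eta$-periodic; either it is a $2^k$-periodic point lying in the $\eta$-orbit of $\underline0$, or it is an $m\cdot2^k$-periodic point of $\eta$ for some positive integer $m$.
   Context: $\Sigma=\{0,1\}^{\mathbb N}$ with the product topology. For a $k$-block $n_k\in\{0,1\}^k$, the cylinder $\Sigma_{n_k}$ is the set of sequences beginning with $n_k$; $n_k\underline0$ denotes the concatenation of $n_k$ with the constant sequence $\underline0=000\dots$, and $\underline1=111\dots$. $B$ is the set of sequences that are eventually constant (eventually all $0$ or eventually all $1$). The adding machine $\alpha\colon\Sigma\to\Sigma$ adds $1\underline0=1000\dots$ with carry to the right (the first coordinate being least significant), i.e. $\alpha(x)=x+1\underline0$ in the 2-adic integers; e.g. $\underline1\mapsto\underline0\mapsto1\underline0\mapsto01\underline0\mapsto11\underline0$. $\tau_{n_k}\colon\Sigma\to\Sigma$ is the identity on sequences not in $\Sigma_{n_k}$, and on $\Sigma_{n_k}$ keeps the first $k$ symbols and swaps $0\leftrightarrow1$ in all remaining coordinates, e.g. $\tau_{n_k}(n_k110100\dots)=n_k001011\dots$. *)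

(* Defs.v *)
From mathcomp Require Import all_boot.
Set Implicit Arguments. Unset Strict Implicit. Unset Printing Implicit Defensive.

(* Sigma = {0,1}^N, with 0 = false, 1 = true; coordinate 0 is the first one. *)
Definition Sigma := nat -> bool.

Definition zeroS : Sigma := fun _ => false.
Definition oneS : Sigma := fun _ => true.

Definition in_cyl (k : nat) (w : k.-tuple bool) (x : Sigma) : bool :=
  all (fun i => x i == nth false w i) (iota 0 k).

Definition block_zero (k : nat) (w : k.-tuple bool) : Sigma :=
  fun i => if i < k then nth false w i else false.

(* Adding machine: x + 1000... in the 2-adic integers, carry to the right.
   Coordinate i flips exactly when all coordinates j < i are 1. *)
Definition alpha (x : Sigma) : Sigma :=
  fun i => if all x (iota 0 i) then ~~ x i else x i.

Definition tau (k : nat) (w : k.-tuple bool) (x : Sigma) : Sigma :=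
  if in_cyl w x then (fun i => if i < k then x i else ~~ x i) else x.

(* Continuity of f : Sigma -> Sigma for the product topology (the cylinders
   form a base): every finite prefix of f x is determined by a finite prefix
   of x. *)
Definition continuous_Sigma (f : Sigma -> Sigma) : Prop :=
  forall (x : Sigma) (N : nat), exists M : nat,
    forall y : Sigma, (forall i, i < M -> y i = x i) ->
      forall i, i < N -> f y i = f x i.

Definition periodic_point_of_period (f : Sigma -> Sigma) (x : Sigma) (p : nat) : Prop :=
  0 < p /\ iter p f x = x /\ (forall q, 0 < q -> q < p -> iter q f x <> x).

Definition periodic_point (f : Sigma -> Sigma) (x : Sigma) : Prop :=
  exists p, 0 < p /\ iter p f x = x.

Definition in_eta_orbit (f : Sigma -> Sigma) (x y : Sigma) : Prop :=
  exists j : nat, y = iter j f x.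

Definition eventually_constant (x : Sigma) : Prop :=
  exists (N : nat) (b : bool), forall i, N <= i -> x i = b.

(* Main.v *)
Require Import Defs.
From mathcomp Require Import all_boot zify.
From Stdlib Require Import FunctionalExtensionality Classical.

Fixpoint pv (n : nat) (x : Sigma) : nat :=
  if n is n'.+1 then pv n' x + 2 ^ n' * x n' else 0.

Definition sh (k : nat) (x : Sigma) : Sigma := fun i => x (k + i).
Definition neg (x : Sigma) : Sigma := fun i => ~~ x i.

Lemma iotaSr n : iota 0 n.+1 = rcons (iota 0 n) n.
Proof. by rewrite -addn1 iotaD cats1. Qed.

Lemma pv_lt n x : pv n x < 2 ^ n.
Proof.
elim: n => [|n IH] //=. rewrite expnS.
by case: (x n); rewrite /= ?muln1 ?muln0; lia.
Qed.

Lemma pv_all n x : all x (iota 0 n) = (pv n x == 2 ^ n - 1).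
Proof.
elim: n => [|n IH] //. rewrite iotaSr all_rcons /= IH.
have := pv_lt n x. have := expn_gt0 2 n. rewrite expnS.
case: (x n); rewrite /= ?muln1 ?muln0 ?andbT ?andbF => h1 h2.
  by apply/eqP/eqP; lia.
by apply/esym/eqP; lia.
Qed.

Lemma pv_alpha n x : pv n (alpha x) = (pv n x).+1 %% 2 ^ n.
Proof.
elim: n => [|n IH] //=. rewrite IH.
have hl := pv_lt n x. have h0 : 0 < 2 ^ n by rewrite expn_gt0.
rewrite {1}/alpha pv_all.
case: (boolP (pv n x == 2 ^ n - 1)) => [/eqP e|ne].
  rewrite e. have -> : (2 ^ n - 1).+1 = 2 ^ n by lia.
  rewrite modnn add0n expnS.
  case: (x n) => /=; rewrite ?muln1 ?muln0.
    have -> : (2 ^ n - 1 + 2 ^ n).+1 = 0 + 2 * 2 ^ n by lia.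
    by rewrite modnDr mod0n.
  rewrite modn_small; lia.
have ne' : pv n x <> 2 ^ n - 1 by move=> h; rewrite h eqxx in ne.
rewrite modn_small; last lia.
rewrite modn_small // expnS. by case: (x n); rewrite /= ?muln1 ?muln0; lia.
Qed.

Lemma pv_ext n x y : (forall i, i < n -> x i = y i) -> pv n x = pv n y.
Proof.
elim: n => [|n IH] h //=. by rewrite IH ?h // => i hi; apply: h; lia.
Qed.

Lemma pv_inj n x y : pv n x = pv n y -> forall i, i < n -> x i = y i.
Proof.
elim: n => [|n IH] //= h i hi.
have hx := pv_lt n x. have hy := pv_lt n y.
have hxy : x n = y n /\ pv n x = pv n y.
  by move: h; case: (x n); case: (y n); rewrite /= ?muln1 ?muln0; lia.
case: hxy => e1 e2.
have [/eqP ->|ne] := boolP (i == n) => //.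
apply: IH => //; lia.
Qed.

Lemma eqS k x y : pv k x = pv k y -> sh k x = sh k y -> x = y.
Proof.
move=> h1 h2; apply: functional_extensionality => i.
case: (ltnP i k) => hi; first exact: pv_inj h1 _ hi.
have -> : i = k + (i - k) by lia.
exact: (congr1 (fun f => f (i - k)) h2).
Qed.

Lemma negK t : neg (neg t) = t.
Proof. by apply: functional_extensionality => i; rewrite /neg negbK. Qed.

Lemma alpha_key t : alpha (neg (alpha (neg t))) = t.
Proof.
set b := neg (alpha (neg t)).
have hb : forall j, b j = if all (neg t) (iota 0 j) then ~~ t j else t j.
  by move=> j; rewrite /b /neg /alpha; case: all; rewrite ?negbK.
have ha : forall i, all b (iota 0 i) = all (neg t) (iota 0 i).
  elim=> [|i IH] //. rewrite !iotaSr !all_rcons IH hb.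
  by case: all; rewrite ?andbF ?andbT.
apply: functional_extensionality => i.
rewrite /alpha ha hb. case: all => //. by rewrite negbK.
Qed.

Lemma alpha_key2 t : neg (alpha (neg (alpha t))) = t.
Proof.
by rewrite -{1}(negK t) alpha_key negK.
Qed.

Lemma tau_lo k (w : k.-tuple bool) x i : i < k -> tau w x i = x i.
Proof. by move=> hi; rewrite /tau; case: in_cyl; rewrite ?hi. Qed.

Lemma pv_tau k (w : k.-tuple bool) x : pv k (tau w x) = pv k x.
Proof. by apply: pv_ext => i hi; rewrite tau_lo. Qed.

Lemma sh_tau k (w : k.-tuple bool) x :
  sh k (tau w x) = if in_cyl w x then neg (sh k x) else sh k x.
Proof.
rewrite /tau; case: in_cyl => //.
apply: functional_extensionality => i; rewrite /sh /neg.
by have -> : (k + i < k) = false by lia.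
Qed.

Lemma cyl_pv k (w : k.-tuple bool) x :
  in_cyl w x = (pv k x == pv k (block_zero w)).
Proof.
apply/idP/eqP.
  move/allP=> h; apply: pv_ext => i hi.
  have := h i; rewrite mem_iota add0n hi => /(_ isT) /eqP ->.
  by rewrite /block_zero hi.
move=> /pv_inj h; apply/allP => i; rewrite mem_iota add0n => /andP [_ hi].
by rewrite (h i hi) /block_zero hi.
Qed.

Lemma all_prefix k x y : (forall i, i < k -> x i = y i) ->
  all x (iota 0 k) = all y (iota 0 k).
Proof.
move=> h; apply: eq_in_all => i; rewrite mem_iota add0n => /andP [_ hi].
exact: h.
Qed.

Lemma sh_alpha k x :
  sh k (alpha x) = if all x (iota 0 k) then alpha (sh k x) else sh k x.
Proof.
apply: functional_extensionality => i.
rewrite /sh /alpha iotaD all_cat.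
have -> : iota (0 + k) i = map (addn k) (iota 0 i) by rewrite add0n -iotaDl addn0.
rewrite all_map.
by case: (all x (iota 0 k)).
Qed.

Definition etaf k (w : k.-tuple bool) (x : Sigma) : Sigma := alpha (tau w x).
Arguments etaf {k} w x.

Definition step k c (t : Sigma) q : Sigma :=
  let t1 := if q == c then neg t else t in
  if q == 2 ^ k - 1 then alpha t1 else t1.

Lemma pv_eta k (w : k.-tuple bool) x : pv k (etaf w x) = (pv k x).+1 %% 2 ^ k.
Proof. by rewrite /etaf pv_alpha pv_tau. Qed.

Lemma sh_eta k (w : k.-tuple bool) x :
  sh k (etaf w x) = step k (pv k (block_zero w)) (sh k x) (pv k x).
Proof.
rewrite /etaf sh_alpha sh_tau /step -cyl_pv.
rewrite (@all_prefix _ _ x); last by move=> i hi; rewrite tau_lo.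
by rewrite pv_all.
Qed.

Lemma pv_iter k (w : k.-tuple bool) x n :
  pv k (iter n (etaf w) x) = (pv k x + n) %% 2 ^ k.
Proof.
elim: n => [|n IH] /=.
  by rewrite addn0 modn_small // pv_lt.
rewrite pv_eta IH -addn1 modnDml. by rewrite addn1 addnS.
Qed.

Lemma sh_iterS k (w : k.-tuple bool) x n :
  sh k (iter n.+1 (etaf w) x) =
  step k (pv k (block_zero w)) (sh k (iter n (etaf w) x)) ((pv k x + n) %% 2 ^ k).
Proof. by rewrite /= sh_eta pv_iter. Qed.

Lemma segment k (w : k.-tuple bool) x s n :
  (forall m, s <= m < s + n -> (pv k x + m) %% 2 ^ k != pv k (block_zero w)
      /\ (pv k x + m) %% 2 ^ k != 2 ^ k - 1) ->
  sh k (iter (s + n) (etaf w) x) = sh k (iter s (etaf w) x).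
Proof.
elim: n => [|n IH] h; first by rewrite addn0.
rewrite addnS sh_iterS IH; last by move=> m hm; apply: h; lia.
have [h1 h2] := h (s + n) ltac:(lia).
by rewrite /step (negbTE h1) (negbTE h2).
Qed.

Lemma modK2 K n : 0 < K -> n < 2 * K -> n %% K = if n < K then n else n - K.
Proof.
move=> hK hn; case: ifP => h; first by rewrite modn_small.
have -> : n = (n - K) + K by lia.
rewrite modnDr modn_small; lia.
Qed.

Lemma resid K p c m : p < K -> c < K -> m < K ->
  ((p + m) %% K == c) = (m == (if p <= c then c - p else c + K - p)).
Proof.
move=> hp hc hm; rewrite modK2; try lia.
by case: ifP => h1; case: ifP => h2; apply/eqP/eqP; lia.
Qed.

Lemma full_cycle k (w : k.-tuple bool) x :
  sh k (iter (2 ^ k) (etaf w) x) =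
  if (if pv k x <= pv k (block_zero w) then pv k (block_zero w) - pv k x
      else pv k (block_zero w) + 2 ^ k - pv k x) <= 2 ^ k - 1 - pv k x
  then alpha (neg (sh k x)) else neg (alpha (sh k x)).
Proof.
set K := 2 ^ k. set p := pv k x. set c := pv k (block_zero w).
set a := if p <= c then _ else _. set b := K - 1 - p.
have hK : 0 < K by rewrite expn_gt0.
have hp : p < K by apply: pv_lt.
have hc : c < K by apply: pv_lt.
have ha : a < K by rewrite /a; case: ifP; lia.
have hb : b < K by rewrite /b; lia.
have rc : forall m, m < K -> ((p + m) %% K == c) = (m == a) by move=> m hm; exact: resid.
have rM : forall m, m < K -> ((p + m) %% K == K - 1) = (m == b).
  move=> m hm; rewrite resid; try lia.
  rewrite /b; case: ifP => h; apply/eqP/eqP; lia.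
have seg : forall s e, s <= e <= K -> (forall m, s <= m < e -> m != a /\ m != b) ->
    sh k (iter e (etaf w) x) = sh k (iter s (etaf w) x).
  move=> s e /andP [h1 h2] h.
  have := @segment k w x s (e - s).
  rewrite subnKC // => -> // m hm.
  have hmK : m < K by lia.
  have [n1 n2] := h m ltac:(lia).
  by rewrite rc // rM.
have stp : forall m, m < K -> sh k (iter m.+1 (etaf w) x) =
    step k c (sh k (iter m (etaf w) x)) ((p + m) %% K).
  by move=> m hm; rewrite sh_iterS.
have e0 : sh k (iter 0 (etaf w) x) = sh k x by [].
case: (ltngtP a b) => hab.
- have e1 := seg 0 a ltac:(lia) ltac:(move=> m hm; split; apply/eqP; lia).
  have e2 := stp a ha. rewrite /step rc // rM // eqxx e1 (_ : (a == b) = false) in e2;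
    last by apply/eqP; lia.
  have e3 := seg a.+1 b ltac:(lia) ltac:(move=> m hm; split; apply/eqP; lia).
  have e4 := stp b hb. rewrite /step rc // rM // eqxx e3 e2 (_ : (b == a) = false) in e4;
    last by apply/eqP; lia.
  have e5 := seg b.+1 K ltac:(lia) ltac:(move=> m hm; split; apply/eqP; lia).
  by rewrite e5 e4.
- have e1 : sh k (iter b (etaf w) x) = sh k (iter 0 (etaf w) x).
    apply: seg. lia. move=> m hm. split; apply/eqP; lia.
  have e2 := stp b hb. rewrite /step rc // rM // eqxx e1 (_ : (b == a) = false) in e2;
    last by apply/eqP; lia.
  have e3 := seg b.+1 a ltac:(lia) ltac:(move=> m hm; split; apply/eqP; lia).
  have e4 := stp a ha. rewrite /step rc // rM // eqxx e3 e2 (_ : (a == b) = false) in e4;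
    last by apply/eqP; lia.
  have e5 := seg a.+1 K ltac:(lia) ltac:(move=> m hm; split; apply/eqP; lia).
  by rewrite e5 e4.
- have e1 := seg 0 a ltac:(lia) ltac:(move=> m hm; split; apply/eqP; lia).
  have e2 := stp a ha. rewrite /step rc // rM // eqxx -hab eqxx e1 in e2.
  have e5 := seg a.+1 K ltac:(lia) ltac:(move=> m hm; split; apply/eqP; lia).
  by rewrite e5 e2.
Qed.

Lemma pv_iterK k (w : k.-tuple bool) x : pv k (iter (2 ^ k) (etaf w) x) = pv k x.
Proof. by rewrite pv_iter modnDr modn_small // pv_lt. Qed.

Lemma period2 k (w : k.-tuple bool) x :
  iter (2 ^ k + 2 ^ k) (etaf w) x = x.
Proof.
rewrite iterD; set y := iter (2 ^ k) (etaf w) x.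
have hy : pv k y = pv k x by rewrite pv_iterK.
apply: (@eqS k); first by rewrite pv_iterK.
rewrite full_cycle hy /y full_cycle.
by case: ifP => h; rewrite h ?alpha_key ?alpha_key2.
Qed.

Lemma pv_zero n : pv n zeroS = 0.
Proof. by elim: n => [|n IH] //=; rewrite IH muln0. Qed.

Lemma all_true s : all (fun _ : nat => true) s.
Proof. by elim: s. Qed.

Lemma iterK_zero k (w : k.-tuple bool) : iter (2 ^ k) (etaf w) zeroS = zeroS.
Proof.
have hc : pv k (block_zero w) < 2 ^ k by apply: pv_lt.
apply: (@eqS k); first by rewrite pv_iterK.
rewrite full_cycle pv_zero leq0n subn0 ifT; last by lia.
apply: functional_extensionality => i.
by rewrite /alpha /neg /sh /zeroS /= all_true.
Qed.

Lemma iter_c k (w : k.-tuple bool) :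
  iter (pv k (block_zero w)) (etaf w) zeroS = block_zero w.
Proof.
have hc : pv k (block_zero w) < 2 ^ k by apply: pv_lt.
apply: (@eqS k); first by rewrite pv_iter pv_zero add0n modn_small.
have := @segment k w zeroS 0 (pv k (block_zero w)).
rewrite add0n => -> /=.
  apply: functional_extensionality => i; rewrite /sh /zeroS /block_zero.
  by have -> : (k + i < k) = false by lia.
move=> m hm; rewrite pv_zero add0n modn_small; last by lia.
split; apply/eqP; lia.
Qed.

Lemma iter_mod (T : Type) (f : T -> T) K z n :
  iter K f z = z -> iter n f z = iter (n %% K) f z.
Proof.
move=> hz; rewrite {1}(divn_eq n K) addnC iterD.
congr (iter _ f _).
elim: (n %/ K) => [|q IH] //.
by rewrite mulSn iterD IH hz.
Qed.

Lemma noret K p q : 0 < K -> p < K -> 0 < q < 2 * K -> q <> K -> (p + q) %% K <> p.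
Proof.
move=> hK hp hq hqK.
case: (ltnP q K) => h.
  rewrite modK2; [case: ifP => ?; lia | lia | lia].
have -> : p + q = (p + q - K) + K by lia.
rewrite modnDr modK2; [case: ifP => ?; lia | lia | lia].
Qed.

Lemma cont_eta k (w : k.-tuple bool) : continuous_Sigma (etaf w).
Proof.
move=> x N; exists (N + k) => y hy i hi.
have hc : in_cyl w y = in_cyl w x.
  rewrite !cyl_pv (@pv_ext k y x) // => j hj; apply: hy; lia.
have ht : forall j, j < N + k -> tau w y j = tau w x j.
  by move=> j hj; rewrite /tau hc; case: in_cyl; rewrite hy.
rewrite /etaf /alpha (@all_prefix i (tau w y) (tau w x)).
  by rewrite ht //; lia.
move=> j hj; apply: ht; lia.
Qed.

Lemma main_aux (k : nat) (hk : 0 < k) (w : k.-tuple bool) :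
  continuous_Sigma (etaf w) /\
  (periodic_point_of_period (etaf w) zeroS (2 ^ k) /\
   (forall y : Sigma, in_eta_orbit (etaf w) zeroS y /\ in_cyl w y <-> y = block_zero w)) /\
  (forall x : Sigma, eventually_constant x ->
     periodic_point (etaf w) x /\
     ((periodic_point_of_period (etaf w) x (2 ^ k) /\ in_eta_orbit (etaf w) zeroS x) \/
      (exists m : nat, 0 < m /\ periodic_point_of_period (etaf w) x (m * 2 ^ k)))).
Proof.
have hK : 0 < 2 ^ k by rewrite expn_gt0.
split; first exact: cont_eta.
split; [split|].
- split=> //; split; first exact: iterK_zero.
  move=> q hq hqK e.
  have := congr1 (pv k) e; rewrite pv_iter pv_zero add0n modn_small //; lia.
- move=> y; split.
    move=> [[j ->] hcyl]; move: hcyl.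
    rewrite cyl_pv pv_iter pv_zero add0n => /eqP hj.
    by rewrite (@iter_mod _ _ _ _ j (iterK_zero k w)) hj iter_c.
  move=> ->; split; last by rewrite cyl_pv.
  by exists (pv k (block_zero w)); rewrite iter_c.
- move=> x _; split.
    exists (2 ^ k + 2 ^ k); split; [lia | exact: period2].
  right.
  have hp : pv k x < 2 ^ k by apply: pv_lt.
  have [e|ne] := classic (iter (2 ^ k) (etaf w) x = x).
    exists 1; split=> //; rewrite mul1n; split=> //; split=> // q hq hqK e2.
    have := congr1 (pv k) e2; rewrite pv_iter.
    apply: (@noret _ _ q hK hp); lia.
  exists 2; split=> //; split; first lia.
  split; first by rewrite mul2n -addnn period2.
  move=> q hq hqK e2.
  have [eq|hqn] := eqVneq q (2 ^ k); first by rewrite eq in e2.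
  have := congr1 (pv k) e2; rewrite pv_iter.
  apply: (@noret _ _ q hK hp); first lia.
  by apply/eqP.
Qed.

Theorem mainTheorem4 (k : nat) (hk : 0 < k) (w : k.-tuple bool) :
  let eta := fun x : Sigma => alpha (tau w x) in
  continuous_Sigma eta /\
  (periodic_point_of_period eta zeroS (2 ^ k) /\
   (forall y : Sigma, in_eta_orbit eta zeroS y /\ in_cyl w y <-> y = block_zero w)) /\
  (forall x : Sigma, eventually_constant x ->
     periodic_point eta x /\
     ((periodic_point_of_period eta x (2 ^ k) /\ in_eta_orbit eta zeroS x) \/
      (exists m : nat, 0 < m /\ periodic_point_of_period eta x (m * 2 ^ k)))).
Proof. exact: (@main_aux k hk w). Qed.
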